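(* Let $f:[0,\infty)\to\mathbb{R}$ be convex with $f(1)=0$ and let $G$ be increasing and convex with $G(0)=0$. Let $\mathcal{M}$ be a finite set with $|\mathcal{M}|\ge2$, and let $p_{M\hat M}$ be a joint distribution on $\mathcal{M}\times\mathcal{M}$ whose $M$-marginal is uniform and with $p_{M\hat M}(M\ne\hat M)=\epsilon$. Then under $p_{M\hat M}$, $$I_{G,f}(M;\hat M)\ge G\!\left(\frac{1}{|\mathcal{M}|}f\big(|\mathcal{M}|(1-\epsilon)\big)+\frac{|\mathcal{M}|-1}{|\mathcal{M}|}f\!\left(\frac{|\mathcal{M}|\epsilon}{|\mathcal{M}|-1}\right)\right).$$
   Context: $D_f(p\|q)=\sum_y q(y) f(p(y)/q(y))$ with $0f(0/0)=0$. $I_{G,f}(M;\hat M)=\min_{q_{\hat M}}\sum_m p_M(m)\,G(D_f(p_{\hat M|M=m}\|q_{\hat M}))$. *)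

(* Defs.v *)
From HB Require Import structures.
From mathcomp Require Import all_boot all_order all_algebra.
From mathcomp Require Import all_classical all_reals all_analysis.
Set Implicit Arguments. Unset Strict Implicit. Unset Printing Implicit Defensive.
Import Order.TTheory GRing.Theory Num.Theory.
Local Open Scope classical_set_scope.
Local Open Scope ring_scope.
Local Open Scope ereal_scope.

Definition convex_on_nonneg (R : realType) (h : R -> R) : Prop :=
  forall x y t : R, (0 <= x)%R -> (0 <= y)%R -> (0 <= t <= 1)%R ->
    (h (t * x + (1 - t) * y) <= t * h x + (1 - t) * h y)%R.

Definition nondecr_on_nonneg (R : realType) (h : R -> R) : Prop :=
  forall x y : R, (0 <= x)%R -> (x <= y)%R -> (h x <= h y)%R.

(* f'(oo) = lim_{t -> oo} f(t)/t, used for the convention 0 f(a/0) = a f'(oo) *)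
Definition fslope (R : realType) (f : R -> R) : \bar R :=
  limn (fun n : nat => ((f n%:R) / n%:R)%:E).

Definition Df (R : realType) (T : finType) (f : R -> R) (P Q : T -> R) : \bar R :=
  \sum_(y : T)
    (if (0 < Q y)%R then (Q y * f (P y / Q y))%:E
     else if P y == 0%R then 0 else (P y)%:E * fslope f).

(* G extended to \bar R by continuity at +oo *)
Definition Gext (R : realType) (G : R -> R) (x : \bar R) : \bar R :=
  match x with
  | r%:E => (G r)%:E
  | +oo => limn (fun n : nat => (G n%:R)%:E)
  | -oo => -oo
  end.

Definition is_distr (R : realType) (T : finType) (q : T -> R) : Prop :=
  (forall y, 0 <= q y)%R /\ (\sum_(y : T) q y = 1)%R.

Definition marg1 (R : realType) (M : finType) (p : M -> M -> R) (m : M) : R :=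
  (\sum_(mh : M) p m mh)%R.
Definition cond (R : realType) (M : finType) (p : M -> M -> R) (m : M) : M -> R :=
  fun mh => (p m mh / marg1 p m)%R.

(* I_{G,f}(M; Mhat) = min over distributions q of sum_m p_M(m) G(D_f(p_{Mhat|M=m} || q))
   (written as an infimum) *)
Definition IGf (R : realType) (M : finType) (G f : R -> R) (p : M -> M -> R) : \bar R :=
  ereal_inf [set \sum_(m : M) (marg1 p m)%:E * Gext G (Df f (cond p m) q)
            | q in [set q : M -> R | is_distr q]].

(* Main.v *)
Require Import Defs.
From HB Require Import structures.
From mathcomp Require Import all_boot all_order all_algebra.
From mathcomp Require Import all_classical all_reals all_analysis.
From mathcomp Require Import ring lra.
Import Order.TTheory GRing.Theory Num.Theory.
Local Open Scope classical_set_scope.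
Local Open Scope ring_scope.

Section Slope.
Variables (R : realType) (f : R -> R).
Hypothesis hf : convex_on_nonneg f.

Lemma chord x y z : 0 <= x -> x < y -> y <= z ->
  (f y - f x) / (y - x) <= (f z - f x) / (z - x).
Proof.
move=> x0 xy yz.
have zx : 0 < z - x by rewrite subr_gt0; exact: lt_le_trans yz.
have yx : 0 < y - x by rewrite subr_gt0.
pose t := (y - x) / (z - x).
have t01 : 0 <= t <= 1.
  apply/andP; split; first by rewrite divr_ge0 // ltW.
  by rewrite ler_pdivrMr // mul1r lerD2r.
have := @hf z x t (le_trans x0 (le_trans (ltW xy) yz)) x0 t01.
have -> : t * z + (1 - t) * x = y.
  rewrite /t; field; by rewrite lt0r_neq0.
move=> H.
idtac.
have : f y - f x <= t * (f z - f x) by rewrite mulrBr; lra.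
rewrite /t => H2; rewrite ler_pdivrMr //; apply: le_trans H2 _; rewrite le_eqVlt; apply/orP; left; apply/eqP; ring.
Qed.

Local Open Scope ereal_scope.

Lemma fslope_cvg : exists l : \bar R, (fun n : nat => ((f n%:R) / n%:R)%:E) @ \oo --> l.
Proof.
pose v := fun n : nat => ((f n.+1%:R - f 0) / n.+1%:R)%:E.
have hv : {homo v : n m / (n <= m)%N >-> n <= m}.
  move=> n m nm; rewrite /v lee_fin.
  have := @chord 0%R n.+1%:R m.+1%:R (lexx 0%R) (ltr0Sn _ _).
  rewrite !subr0; apply; by rewrite ler_nat.
exists (ereal_sup (range v) + 0).
rewrite -cvg_shiftS /=.
have -> : (fun n : nat => ((f n.+1%:R) / n.+1%:R)%:E) = (fun n => v n + (f 0 * harmonic n)%:E).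
  apply/funext => n; rewrite /v /harmonic -EFinD; congr (_%:E).
  rewrite mulrBl addrNK //.
apply: cvgeD; first by rewrite /adde_def /= ?andbT ?orbT //; case: (ereal_sup _).
  exact: ereal_nondecreasing_cvgn.
have -> : (fun n => (f 0 * harmonic n)%:E) = (fun n => (f 0)%:E * (EFin \o harmonic) n) by [].
rewrite -(mule0 (f 0)%:E).
apply: cvgeM => //; last exact: cvge_harmonic.
exact: cvg_cst.
Qed.

Lemma fslope_ge (x y : R) : (0 <= x)%R -> (x < y)%R -> ((f y - f x) / (y - x))%:E <= fslope f.
Proof.
move=> x0 xy.
set s := ((f y - f x) / (y - x))%R.
have [l hl] := fslope_cvg.
have fl : fslope f = l by rewrite /fslope; exact: cvg_lim.
rewrite fl.
pose U := fun n : nat => ((f n.+1%:R) / n.+1%:R)%:E.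
have hU : U @ \oo --> l by move: hl; rewrite -cvg_shiftS.
pose w := fun n : nat => s%:E + ((f x - s * x) * harmonic n)%R%:E.
have hw : w @ \oo --> s%:E + 0.
  apply: cvgeD => //; first exact: cvg_cst.
  have -> : (fun n => ((f x - s * x) * harmonic n)%R%:E) = (fun n => (f x - s * x)%R%:E * (EFin \o harmonic) n) by [].
  rewrite -(mule0 (f x - s * x)%R%:E).
  apply: cvgeM => //; last exact: cvge_harmonic.
  exact: cvg_cst.
rewrite adde0 in hw.
rewrite -(cvg_lim _ hw) // -(cvg_lim _ hU) //.
apply: lee_lim; [by apply/cvg_ex; exists s%:E | by apply/cvg_ex; exists l|].
have y0 : (0 <= y)%R by apply: le_trans x0 (ltW xy).
exists (Num.bound y) => // n /= hn.
have yn : (y <= n.+1%:R)%R.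
  apply: le_trans (ltW (archi_boundP y0)) _; rewrite ler_nat; exact: leqW.
rewrite /w /U -EFinD lee_fin /harmonic.
have := @chord x y n.+1%:R x0 xy yn; rewrite -/s => H.
have nx : (0 < n.+1%:R - x)%R by rewrite subr_gt0; exact: lt_le_trans yn.
rewrite ler_pdivlMr // in H.
rewrite ler_pdivlMr ?ltr0Sn //.
apply: (@le_trans _ _ (s * n.+1%:R + (f x - s*x))%R); last first.
  rewrite mulrBr in H; move: H; set a := (s * _)%R; set b := (s * x)%R; set c := f _; move=> H; lra.
rewrite le_eqVlt; apply/orP; left; apply/eqP =>/=; field.
by rewrite addrC natr1 pnatr_eq0.
Qed.

End Slope.

Local Close Scope ereal_scope.
Local Open Scope ring_scope.
Section Persp.
Variables (R : realType).

Lemma persp_convex (h : R -> R) (a1 a2 b1 b2 : R) : convex_on_nonneg h ->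
  0 <= a1 -> 0 <= a2 -> 0 < b1 -> 0 < b2 ->
  (b1 + b2) * h ((a1 + a2) / (b1 + b2)) <= b1 * h (a1 / b1) + b2 * h (a2 / b2).
Proof.
move=> hh a10 a20 b10 b20.
have bb : 0 < b1 + b2 by rewrite addr_gt0.
pose t := b1 / (b1 + b2).
have t01 : 0 <= t <= 1.
  apply/andP; split; first by rewrite divr_ge0 // ltW.
  by rewrite ler_pdivrMr // mul1r lerDl ltW.
have := @hh (a1 / b1) (a2 / b2) t (divr_ge0 a10 (ltW b10)) (divr_ge0 a20 (ltW b20)) t01.
have -> : t * (a1 / b1) + (1 - t) * (a2 / b2) = (a1 + a2) / (b1 + b2).
  rewrite /t; field; rewrite !lt0r_neq0 //.
move=> H.
have E : b1 * h (a1 / b1) + b2 * h (a2 / b2) = (b1 + b2) * (t * h (a1 / b1) + (1 - t) * h (a2 / b2)).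
  rewrite /t; field; rewrite !lt0r_neq0 //.
rewrite E; apply: ler_wpM2l => //; exact: ltW.
Qed.

Lemma big_subadd (h : R -> R -> \bar R) (D : R -> R -> Prop) :
  h 0 0 = 0%E -> D 0 0 ->
  (forall x1 y1 x2 y2, D x1 y1 -> D x2 y2 -> D (x1 + x2) (y1 + y2)) ->
  (forall x1 y1 x2 y2, D x1 y1 -> D x2 y2 -> (h (x1 + x2)%R (y1 + y2)%R <= h x1 y1 + h x2 y2)%E) ->
  forall (I : Type) (r : seq I) (P : pred I) (a b : I -> R),
  (forall i, P i -> D (a i) (b i)) ->
  (h (\sum_(i <- r | P i) a i)%R (\sum_(i <- r | P i) b i)%R <= \sum_(i <- r | P i) h (a i) (b i))%E.
Proof.
move=> h00 D00 Dadd hsub I r P a b hD.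
suff : D (\sum_(i <- r | P i) a i) (\sum_(i <- r | P i) b i) /\
  (h (\sum_(i <- r | P i) a i)%R (\sum_(i <- r | P i) b i)%R <= \sum_(i <- r | P i) h (a i) (b i))%E by case.
elim: r => [|i r [IH1 IH2]]; first by rewrite !big_nil h00.
rewrite !big_cons; case: ifP => Pi //; split; first exact: Dadd (hD i Pi) IH1.
apply: le_trans (hsub _ _ _ _ (hD i Pi) IH1) _.
exact: leeD2l.
Qed.

Variables (f : R -> R).
Hypothesis hf : convex_on_nonneg f.
Let F := fslope f.
Hypothesis hF : forall x y : R, 0 <= x -> x < y -> (((f y - f x) / (y - x))%:E <= F)%E.

Definition phi (a b : R) : \bar R :=
  if (0 < b)%R then (b * f (a / b))%:E
  else if a == 0%R then 0%E else (a%:E * F)%E.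

Lemma phi0 a : phi a 0 = (a%:E * F)%E.
Proof. rewrite /phi ltxx; case: eqP => [->|//]; by rewrite mul0e. Qed.

Lemma F_gtNy : (-oo < F)%E.
Proof. have := @hF 0 1 (lexx 0) ltr01; case: F => // *; exact: ltNyr. Qed.

Lemma phi_gtNy a b : 0 <= a -> 0 <= b -> (-oo < phi a b)%E.
Proof.
move=> a0 b0; case: (ltrP 0 b) => b0'.
  by rewrite /phi b0'; exact: ltNyr.
have -> : b = 0 by apply/eqP; rewrite eq_le b0' b0.
rewrite phi0; have := F_gtNy; case: F => [r _| _ |//]; first by rewrite -EFinM ltNyr.
case: (ltrP 0 a) => a0'; first by rewrite gt0_muley.
have -> : a = 0 by apply/eqP; rewrite eq_le a0' a0.
by rewrite mul0e ltNyr.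
Qed.

Lemma phi_mixed a1 a2 b2 : 0 <= a1 -> 0 <= a2 -> 0 < b2 ->
  (phi (a1 + a2)%R b2 <= phi a1 0 + phi a2 b2)%E.
Proof.
move=> a10 a20 b20; rewrite phi0.
case: (ltrP 0 a1) => a10'; last first.
  have -> : a1 = 0 by apply/eqP; rewrite eq_le a10' a10.
  by rewrite mul0e add0e add0r.
rewrite /phi b20.
have := @hF (a2 / b2) ((a1 + a2) / b2) (divr_ge0 a20 (ltW b20)).
rewrite ltr_pM2r ?invr_gt0 // ltrDr => /(_ a10') H.
have a1E : (0 <= a1%:E)%E by rewrite lee_fin.
have H2 := lee_wpmul2l a1E H.
apply: le_trans _ (leeD2r _ H2).
rewrite -EFinM -EFinD lee_fin.
rewrite le_eqVlt; apply/orP; left; apply/eqP; field.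
rewrite (lt0r_neq0 b20) /=.
by rewrite addrK lt0r_neq0.
Qed.


Lemma phi_sub a1 a2 b1 b2 : 0 <= a1 -> 0 <= a2 -> 0 <= b1 -> 0 <= b2 ->
  (phi (a1 + a2)%R (b1 + b2)%R <= phi a1 b1 + phi a2 b2)%E.
Proof.
move=> a10 a20 b10 b20.
case: (ltrP 0 b1) => b1p; case: (ltrP 0 b2) => b2p.
- rewrite /phi b1p b2p addr_gt0 // -EFinD lee_fin; exact: persp_convex.
- have -> : b2 = 0 by apply/eqP; rewrite eq_le b2p b20.
  by rewrite addr0 addrC addeC; apply: phi_mixed.
- have -> : b1 = 0 by apply/eqP; rewrite eq_le b1p b10.
  by rewrite add0r; apply: phi_mixed.
- have -> : b1 = 0 by apply/eqP; rewrite eq_le b1p b10.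
  have -> : b2 = 0 by apply/eqP; rewrite eq_le b2p b20.
  by rewrite addr0 !phi0 EFinD ge0_muleDl.
Qed.

Lemma phi_sum (I : Type) (r : seq I) (P : pred I) (a b : I -> R) :
  (forall i, P i -> 0 <= a i /\ 0 <= b i) ->
  (phi (\sum_(i <- r | P i) a i)%R (\sum_(i <- r | P i) b i)%R <= \sum_(i <- r | P i) phi (a i) (b i))%E.
Proof.
apply: (@big_subadd _ (fun x y => 0 <= x /\ 0 <= y)).
- by rewrite phi0 mul0e.
- by [].
- by move=> ? ? ? ? [? ?] [? ?]; split; apply: addr_ge0.
- by move=> ? ? ? ? [? ?] [? ?]; apply: phi_sub.
Qed.

Lemma phi_homog c a b : 0 < c -> phi (c * a) (c * b) = (c%:E * phi a b)%E.
Proof.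
move=> c0; rewrite /phi pmulr_rgt0 //; case: ifP => b0.
  rewrite -EFinM; congr (_%:E); rewrite -mulrA; congr (_ * _); congr (_ * f _).
  field; rewrite (lt0r_neq0 c0) (lt0r_neq0 b0) //.
rewrite mulf_eq0 (negbTE (lt0r_neq0 c0)) /=; case: ifP => _; first by rewrite mule0.
by rewrite EFinM muleA.
Qed.

End Persp.

Section Psi.
Variables (R : realType) (G : R -> R).
Hypothesis hG : convex_on_nonneg G.

Definition psi (a b : R) : \bar R := if (0 < b)%R then (b * G (a / b))%:E else 0%E.

Lemma psi_sum (I : Type) (r : seq I) (P : pred I) (a b : I -> R) :
  (forall i, P i -> 0 <= a i /\ 0 < b i) ->
  (psi (\sum_(i <- r | P i) a i)%R (\sum_(i <- r | P i) b i)%R <= \sum_(i <- r | P i) psi (a i) (b i))%E.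
Proof.
move=> hab.
have p00 : psi 0 0 = 0%E by rewrite /psi ltxx.
apply: (@big_subadd R _ (fun x y => 0 <= x /\ 0 <= y /\ (y = 0 -> x = 0))).
- by rewrite /psi ltxx.
- by [].
- move=> x1 y1 x2 y2 [x10 [y10 e1]] [x20 [y20 e2]]; split; first exact: addr_ge0.
  split; first exact: addr_ge0.
  move=> /eqP; rewrite paddr_eq0 // => /andP[/eqP/e1 -> /eqP/e2 ->]; by rewrite addr0.
- move=> x1 y1 x2 y2 [x10 [y10 e1]] [x20 [y20 e2]].
  case: (ltrP 0 y1) => y1p; case: (ltrP 0 y2) => y2p.
  + rewrite /psi y1p y2p addr_gt0 // -EFinD lee_fin; exact: persp_convex.
  + have e : y2 = 0 by apply/eqP; rewrite eq_le y2p y20.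
    by rewrite e (e2 e) !addr0 p00 adde0.
  + have e : y1 = 0 by apply/eqP; rewrite eq_le y1p y10.
    by rewrite e (e1 e) !add0r p00 add0e.
  + have e : y1 = 0 by apply/eqP; rewrite eq_le y1p y10.
    have e' : y2 = 0 by apply/eqP; rewrite eq_le y2p y20.
    by rewrite e e' (e1 e) (e2 e') !addr0 p00 adde0.
- move=> i Pi; have [? ?] := hab i Pi; split => //; split; first exact: ltW.
  by move=> e; move: (hab i Pi) => [_]; rewrite e ltxx.
Qed.

End Psi.

Section GextS.
Variables (R : realType) (G : R -> R).
Hypothesis hGm : nondecr_on_nonneg G.
Hypothesis G0 : G 0 = 0.

Lemma Gext_pinfty x : 0 <= x -> ((G x)%:E <= Gext G +oo)%E.
Proof.
move=> x0; rewrite /Gext.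
have hc : (fun n : nat => (G n%:R)%:E) @ \oo --> ereal_sup (range (fun n : nat => (G n%:R)%:E)).
  apply: ereal_nondecreasing_cvgn => n m nm; rewrite lee_fin; apply: hGm; by rewrite ?ler0n ?ler_nat.
rewrite (cvg_lim _ hc) //.
have H : ((G x)%:E <= (G (Num.bound x)%:R)%:E)%E.
  rewrite lee_fin; apply: hGm => //; exact: ltW (archi_boundP x0).
apply: le_trans H _.
by apply: ereal_sup_ubound; exists (Num.bound x).
Qed.

Lemma Gext_ge0 x : (0 <= x)%E -> (0 <= Gext G x)%E.
Proof.
case: x => [r| |] //; rewrite ?lee_fin => r0.
  by rewrite -G0; apply: hGm.
have := @Gext_pinfty 0 (lexx 0); rewrite G0; by [].
Qed.

End GextS.

Theorem lemma4 (R : realType) (M : finType) (f G : R -> R) (p : M -> M -> R) (eps : R) :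
  convex_on_nonneg f -> f 1 = 0 ->
  nondecr_on_nonneg G -> convex_on_nonneg G -> G 0 = 0 ->
  (1 < #|M|)%N ->
  (forall m mh, 0 <= p m mh) ->
  \sum_(m : M) \sum_(mh : M) p m mh = 1 ->
  (forall m, \sum_(mh : M) p m mh = 1 / #|M|%:R) ->
  eps = \sum_(m : M) \sum_(mh : M | mh != m) p m mh ->
  ((G (1 / #|M|%:R * f (#|M|%:R * (1 - eps))
       + (#|M|%:R - 1) / #|M|%:R * f (#|M|%:R * eps / (#|M|%:R - 1))))%:E
     <= IGf G f p)%E.
Proof.
move=> hf f1 hGm hG G0 hM p0 psum hm heps.
set N := #|M|%:R.
have N1 : 1 < N by rewrite ltr1n.
have N0 : 0 < N by apply: lt_trans N1.
set T := (X in G X).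
set c := 1 / N.
have c0 : 0 < c by rewrite divr_gt0.
have cN : c * N = 1 by rewrite /c mul1r mulVf // lt0r_neq0.
have hF := @fslope_ge R f hf.
apply/ereal_infP => _ [q [q0 q1] <-].
have hmarg m : marg1 p m = c by rewrite /marg1 hm.
have hP0 m y : 0 <= cond p m y by rewrite /cond hmarg divr_ge0 // ltW.
have hP1 m : \sum_y cond p m y = 1.
  by rewrite /cond hmarg -mulr_suml hm -/c mulfV // lt0r_neq0.
have hD m : Df f (cond p m) q = (\sum_y phi R f (cond p m y) (q y))%E by [].
pose A m := cond p m m.
pose B m := \sum_(y | y != m) cond p m y.
pose Q m := q m.
pose Rm m := \sum_(y | y != m) q y.
pose e m := (phi R f (A m) (Q m) + phi R f (B m) (Rm m))%E.
have B0 m : 0 <= B m by apply: sumr_ge0 => y _.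
have R0 m : 0 <= Rm m by apply: sumr_ge0 => y _.
have he m : (e m <= Df f (cond p m) q)%E.
  rewrite hD (bigD1 m) //=; apply: leeD2l; apply: phi_sum => // y _; split => //.
have AB m : A m + B m = 1 by rewrite -(hP1 m) (bigD1 m).
have QR m : Q m + Rm m = 1 by rewrite -q1 (bigD1 m).
have phi11 : phi R f 1 1 = 0%E by rewrite /phi ltr01 divr1 f1 mulr0.
have e0 m : (0 <= e m)%E.
  rewrite -phi11 -{1}(AB m) -(QR m); by apply: phi_sub => //; apply: hP0.
have hdiag : \sum_m p m m = 1 - eps.
  rewrite heps -psum -sumrB; apply: eq_bigr => i _; by rewrite (bigD1 i) //= addrK.
have eps0 : 0 <= eps by rewrite heps; apply: sumr_ge0 => m _; apply: sumr_ge0.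
have eps1 : 0 <= 1 - eps by rewrite -hdiag; apply: sumr_ge0.
have cp m y : c * cond p m y = p m y by rewrite /cond hmarg mulrC divfK // lt0r_neq0.
have hAs : \sum_m c * A m = 1 - eps by rewrite -hdiag; apply: eq_bigr => m _; rewrite /A cp.
have hQs : \sum_m c * Q m = c by rewrite -mulr_sumr q1 mulr1.
have hBs : \sum_m c * B m = eps.
  rewrite heps; apply: eq_bigr => m _; rewrite /B mulr_sumr; apply: eq_bigr => y _; exact: cp.
have hRm m : Rm m = 1 - q m by move: (QR m); rewrite /Q => H; lra.
have hRs : \sum_m c * Rm m = c * (N - 1).
  under eq_bigr => m _ do rewrite hRm mulrBr mulr1.
  by rewrite sumrB sumr_const -mulr_sumr q1 mulr1 -mulr_natr mulrBr mulr1.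
have N10 : N - 1 != 0 by rewrite subr_eq0 gt_eqF.
have hT : T%:E = (phi R f (1 - eps) c + phi R f eps (c * (N - 1)))%E.
  rewrite /phi c0 (pmulr_rgt0 _ c0) subr_gt0 N1 -EFinD /T /c.
  rewrite (_ : (1 - eps) / (1 / N) = N * (1 - eps)); last by field; rewrite lt0r_neq0.
  rewrite (_ : eps / (1 / N * (N - 1)) = N * eps / (N - 1)); last by field; rewrite N10 lt0r_neq0.
  by rewrite mul1r mulrC [N^-1 * _]mulrC.
have cN1 : 0 <= c * (N - 1) by rewrite mulr_ge0 ?subr_ge0 // ltW.
have T0 : 0 <= T.
  have := @phi_sub R f hf hF _ _ _ _ eps1 eps0 (ltW c0) cN1.
  rewrite subrK (_ : c + c * (N - 1) = 1) ?phi11 -?hT ?lee_fin //.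
  by rewrite mulrBr mulr1 addrC subrK cN.
have key : (T%:E <= \sum_m c%:E * e m)%E.
  have -> : (\sum_m c%:E * e m = \sum_m phi R f (c * A m) (c * Q m) + \sum_m phi R f (c * B m) (c * Rm m))%E.
    rewrite -big_split /=; apply: eq_bigr => m _; rewrite /e muleDr //.
      by rewrite (@phi_homog R f c _ _ c0) (@phi_homog R f c _ _ c0).
    by apply: ltninfty_adde_def; rewrite inE; apply: phi_gtNy => //; by [apply: hP0 | apply: q0 | apply: B0 | apply: R0].
  rewrite hT; apply: leeD.
    have := @phi_sum R f hf hF _ (index_enum M) (fun _ => true) (fun m => c * A m) (fun m => c * Q m).
    rewrite hAs hQs => H; apply: H => m _; split; apply: mulr_ge0; by [apply: ltW | apply: hP0 | apply: q0 | apply: B0 | apply: R0].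
  have := @phi_sum R f hf hF _ (index_enum M) (fun _ => true) (fun m => c * B m) (fun m => c * Rm m).
  rewrite hBs hRs => H; apply: H => m _; split; apply: mulr_ge0; by [apply: ltW | apply: hP0 | apply: q0 | apply: B0 | apply: R0].
have e0' m : (0 <= Df f (cond p m) q)%E by apply: le_trans (e0 m) (he m).
have cE : (0 <= c%:E)%E by rewrite lee_fin ltW.
under eq_bigr => m _ do rewrite hmarg.
case: (boolP [exists m, Df f (cond p m) q == +oo%E]) => [/existsP [m0 /eqP Hm0] | ].
  rewrite (bigD1 m0) //= Hm0.
  have rest : (0 <= \sum_(m | m != m0) c%:E * Gext G (Df f (cond p m) q))%E.
    apply: sume_ge0 => m _; apply: mule_ge0 => //; exact: (@Gext_ge0 R G hGm G0).
  apply: le_trans (leeD2l _ rest); rewrite adde0.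
  have NT0 : 0 <= N * T by rewrite mulr_ge0 // ltW.
  have h1 := lee_wpmul2l cE (@Gext_pinfty R G hGm _ NT0).
  apply: le_trans h1; rewrite -EFinM lee_fin.
  have c01 : 0 <= c <= 1 by rewrite (ltW c0) /c ler_pdivrMr // mul1r ltW.
  have := @hG (N * T) 0 c NT0 (lexx 0) c01.
  by rewrite !mulr0 !addr0 G0 mulr0 addr0 mulrA cN mul1r.
rewrite negb_exists => /forallP Hno.
have fin m : Df f (cond p m) q \is a fin_num.
  rewrite fin_numE; apply/andP; split; last exact: Hno.
  rewrite -ltNye; exact: lt_le_trans (ltNyr 0) (e0' m).
pose d m := fine (Df f (cond p m) q).
have hd m : Df f (cond p m) q = (d m)%:E by rewrite /d fineK.
have d0 m : 0 <= d m by rewrite -lee_fin -hd.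
under eq_bigr => m _ do rewrite hd /= -EFinM.
rewrite sumEFin lee_fin.
have hX : T <= \sum_m c * d m.
  rewrite -lee_fin -sumEFin; apply: le_trans key _; apply: lee_sum => m _.
  have := he m; rewrite (hd m) => hem.
  by rewrite (EFinM c (d m)); apply: lee_wpmul2l.
apply: le_trans (hGm _ _ T0 hX) _.
have := @psi_sum R G hG _ (index_enum M) (fun _ => true) (fun m => c * d m) (fun m => c).
have Sc : \sum_(m : M) c = 1 by rewrite sumr_const -mulr_natr cN.
rewrite Sc {1}/psi ltr01 mul1r divr1 => H.
have H' := H (fun m _ => conj (mulr_ge0 (ltW c0) (d0 m)) c0).
rewrite (eq_bigr (fun m => (c * G (d m))%:E)) in H'; last first.
  by move=> m _; rewrite /psi c0 [c * d m]mulrC mulfK // lt0r_neq0.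
by rewrite sumEFin lee_fin in H'.
Qed.
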